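(* Let $S=\{R_0,\dots,R_d\}$ be a quasi-thin scheme on $X$, $\mathbb F$ a field, $x\in X$, $\mathcal T=\mathcal T(x)$, $E_a^*=E_a^*(x)$, and fix a total order $\preceq$ on $X$. Let $\mathcal U=\{(g,h):k_g=k_h=|R_{g'}R_h|=2\}\cup\{(g,h):(g,h)\text{ is a bad pair of }S\}$. For $(i,j)\in\mathcal U$ write $xR_i=\{u_1,u_2\}$, $xR_j=\{v_1,v_2\}$ with $u_1\prec u_2$, $v_1\prec v_2$, and set $B_{ij}=E_{u_1v_1}+E_{u_2v_2}$. Then $$\mathcal B=\{B_{ij}:(i,j)\in\mathcal U\}\cup\{E_y^*JE_z^*:R_y,R_z\in S\}$$ is an $\mathbb F$-basis of $\mathcal T$.
   Context: Let $X$ be a nonempty finite set. A scheme of class $d$ on $X$ is a partition $S=\{R_0,\dots,R_d\}$ of $X\times X$ into nonempty sets such that $R_0=\{(b,b):b\in X\}$; for each $c$ there is $c'$ with $R_{c'}=\{(f,e):(e,f)\in R_c\}$; and for all $i,j,k$ the intersection number $p_{ij}^k=|\{\ell\in X:(m,\ell)\in R_i,(\ell,n)\in R_j\}|$ does not depend on $(m,n)\in R_k$. The valency is $k_a=p_{aa'}^0$; quasi-thin means all $k_a\le 2$. Complex product: $R_aR_b=\{R_c:p_{ab}^c>0\}$. For $y\in X$, $yR_a=\{z:(y,z)\in R_a\}$. $A_a\in M_X(\mathbb F)$ is the $(0,1)$ adjacency matrix of $R_a$, $E_a^*(y)$ is the diagonal $(0,1)$-matrix with ones exactly at positions indexed by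 $yR_a$, $E_{uv}$ is the matrix unit at $(u,v)$, $J$ is the all-ones matrix. The Terwilliger $\mathbb F$-algebra $\mathcal T(y)$ is the $\mathbb F$-subalgebra of $M_X(\mathbb F)$ generated by $A_0,\dots,A_d,E_0^*(y),\dots,E_d^*(y)$. Bad pair: $(u,v)$ is a bad pair of $S$ if there exist an integer $a\ge1$ and $R_{i_b},R_{j_b},R_{\ell_b}\in S$ ($b=0,\dots,a$) with $i_0=u$, $\ell_a=v$, $k_{i_b}=k_{\ell_b}=2$ and $p_{i_bj_b}^{\ell_b}=1$ for all $b$, $\ell_c=i_{c+1}$ for $0\le c\le a-1$, and $|R_{u'}R_v|=1$. (For $(i,j)\in\mathcal U$ one has $k_i=k_j=2$.) *)

(* Defs.v *)
From HB Require Import structures.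
From mathcomp Require Import all_boot all_order all_algebra.
From mathcomp Require Import boolp.
Set Implicit Arguments. Unset Strict Implicit. Unset Printing Implicit Defensive.
Import GRing.Theory.
Local Open Scope ring_scope.

(* The finite set X is 'I_n; a partition of X x X into d+1 classes R_0..R_d
   is given by the "class function" r : X -> X -> 'I_d.+1 ((u,v) \in R_(r u v)). *)
Section Scheme.
Variables (n d : nat) (r : 'I_n -> 'I_n -> 'I_d.+1).

Definition is_scheme : Prop :=
  [/\ (forall c : 'I_d.+1, exists u v, r u v = c),
      (forall u v, (r u v == ord0) = (u == v)),
      (forall c : 'I_d.+1, exists c' : 'I_d.+1,
          forall e f, (r f e == c') = (r e f == c)) &
      (forall (i j k : 'I_d.+1) (m1 n1 m2 n2 : 'I_n),
          r m1 n1 = k -> r m2 n2 = k ->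
          #|[set l | (r m1 l == i) && (r l n1 == j)]| =
          #|[set l | (r m2 l == i) && (r l n2 == j)]|)].               (* p_ij^k well defined *)

Definition pnum (i j k : 'I_d.+1) : nat :=
  if [pick mn : 'I_n * 'I_n | r mn.1 mn.2 == k] is Some mn then
    #|[set l | (r mn.1 l == i) && (r l mn.2 == j)]|
  else 0%N.

Definition ctr (c : 'I_d.+1) : 'I_d.+1 :=
  if [pick mn : 'I_n * 'I_n | r mn.1 mn.2 == c] is Some mn then r mn.2 mn.1 else c.

Definition valency (a : 'I_d.+1) : nat := pnum a (ctr a) ord0.

Definition quasi_thin : Prop := forall a, (valency a <= 2)%N.

Definition cplx_card (a b : 'I_d.+1) : nat := #|[set c | (0 < pnum a b c)%N]|.

Definition bad_pair (u v : 'I_d.+1) : Prop :=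
  exists (a : nat) (i j l : nat -> 'I_d.+1),
    [/\ (1 <= a)%N, i 0%N = u & l a = v] /\
    [/\
        (forall b, (b <= a)%N ->
           [/\ valency (i b) = 2%N, valency (l b) = 2%N & pnum (i b) (j b) (l b) = 1%N]),
        (forall c, (c < a)%N -> l c = i c.+1) &
        cplx_card (ctr u) v = 1%N].

Definition inU (g h : 'I_d.+1) : Prop :=
  (valency g = 2%N /\ valency h = 2%N /\ cplx_card (ctr g) h = 2%N) \/ bad_pair g h.

Definition Uset : {set 'I_d.+1 * 'I_d.+1} := [set gh | `[< inU gh.1 gh.2 >]].

Variable F : fieldType.

Definition adjA (a : 'I_d.+1) : 'M[F]_n := \matrix_(u, v) (r u v == a)%:R.

Definition Estar (y : 'I_n) (a : 'I_d.+1) : 'M[F]_n :=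
  \matrix_(u, v) ((u == v) && (r y u == a))%:R.

Definition Jmx : 'M[F]_n := const_mx 1.

(* membership in the Terwilliger algebra T(y): the smallest F-subalgebra
   (subspace containing 1 and closed under product) containing all A_a, E_a^*(y) *)
Definition in_terwilliger (y : 'I_n) (M : 'M[F]_n) : Prop :=
  forall V : {vspace 'M[F]_n},
    (1%:M \in V) ->
    (forall a, adjA a \in V) -> (forall a, Estar y a \in V) ->
    (forall P Q, P \in V -> Q \in V -> P *m Q \in V) ->
    M \in V.

Definition total_order (le : rel 'I_n) : Prop :=
  [/\ reflexive le, antisymmetric le, transitive le & total le].

Definition nbrs_sorted (le : rel 'I_n) (y : 'I_n) (a : 'I_d.+1) : seq 'I_n :=
  sort le (enum [set u | r y u == a]).

Definition Bmx (le : rel 'I_n) (y : 'I_n) (i j : 'I_d.+1) : 'M[F]_n :=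
  let su := nbrs_sorted le y i in let sv := nbrs_sorted le y j in
  delta_mx (nth y su 0) (nth y sv 0) + delta_mx (nth y su 1) (nth y sv 1).

Definition Bfamily (le : rel 'I_n) (y : 'I_n) : seq 'M[F]_n :=
  [seq Bmx le y ij.1 ij.2 | ij <- enum Uset] ++
  [seq Estar y yz.1 *m Jmx *m Estar y yz.2 | yz <- enum [set: 'I_d.+1 * 'I_d.+1]].

Definition is_basis_of_terwilliger (y : 'I_n) (B : seq 'M[F]_n) : Prop :=
  [/\ (forall M, M \in B -> in_terwilliger y M),
      free B &
      (forall M, in_terwilliger y M -> M \in <<B>>%VS)].

End Scheme.

(* Main.v *)
Require Import Defs.
From HB Require Import structures.
From mathcomp Require Import all_boot all_order all_algebra.
From mathcomp Require Import boolp.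
From mathcomp Require Import zify ring.
Set Implicit Arguments. Unset Strict Implicit. Unset Printing Implicit Defensive.
Import GRing.Theory.
Local Open Scope ring_scope.

Section Proof.
Variables (n d : nat) (r : 'I_n -> 'I_n -> 'I_d.+1) (F : fieldType) (x : 'I_n) (le : rel 'I_n).
Hypothesis Hs : is_scheme r.
Hypothesis Hqt : quasi_thin r.

Definition NN (a : 'I_d.+1) : {set 'I_n} := [set u | r x u == a].

Lemma ctrE c e f : (r f e == ctr r c) = (r e f == c).
Proof.
case: Hs => Hne _ Htr _.
rewrite /ctr; case: pickP => [[m m'] /= /eqP Hmm | H0].
- have [c' Hc'] := Htr c.
  have -> : r m' m = c' by apply/eqP; rewrite Hc' Hmm.
  exact: Hc'.
- have [u [v Huv]] := Hne c. by move: (H0 (u, v)); rewrite /= Huv eqxx.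
Qed.

Lemma pnumE i j k m m' : r m m' = k ->
  pnum r i j k = #|[set l | (r m l == i) && (r l m' == j)]|.
Proof.
case: Hs => _ _ _ Hreg Hk.
rewrite /pnum; case: pickP => [[m1 m2] /= /eqP H1 | H0].
- exact: (Hreg _ _ _ _ _ _ _ H1 Hk).
- by move: (H0 (m, m')); rewrite /= Hk eqxx.
Qed.

Lemma pnumx i j k z : r x z = k -> pnum r i j k = #|[set w in NN i | r w z == j]|.
Proof. by move=> /pnumE ->; apply: eq_card => w; rewrite !inE. Qed.

Lemma rxx : r x x = ord0.
Proof. by case: Hs => _ H0 _ _; apply/eqP; rewrite H0. Qed.

Lemma valencyE a : valency r a = #|NN a|.
Proof.
rewrite /valency (pnumE _ _ rxx); apply: eq_card => u; rewrite !inE ctrE.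
by rewrite andbb.
Qed.

Lemma NN_gt0 a : (0 < #|NN a|)%N.
Proof.
case: Hs => Hne H0 _ Hreg.
have [u [v Huv]] := Hne a.
have Huu : r u u = ord0 by apply/eqP; rewrite H0.
rewrite -valencyE /valency (pnumE _ _ Huu).
apply/card_gt0P; exists v; rewrite !inE ctrE Huv eqxx //.
Qed.

Lemma rowc g h c w w' : w \in NN g -> w' \in NN g ->
 #|[set z in NN h | r w z == c]| = #|[set z in NN h | r w' z == c]|.
Proof.
case: Hs => _ _ _ Hreg; rewrite !inE => Hw Hw'.
have E1 : r w x = ctr r g by apply/eqP; rewrite ctrE.
have E2 : r w' x = ctr r g by apply/eqP; rewrite ctrE.
have := Hreg c (ctr r h) _ _ _ _ _ E1 E2.
have E u : [set l | (r u l == c) && (r l x == ctr r h)] = [set z in NN h | r u z == c].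
  by apply/setP => z; rewrite !inE ctrE andbC.
by rewrite !E.
Qed.

Lemma colc g h c z z' : z \in NN h -> z' \in NN h ->
 #|[set w in NN g | r w z == c]| = #|[set w in NN g | r w z' == c]|.
Proof. by rewrite !inE => /eqP Hz /eqP Hz'; rewrite -(pnumx _ _ Hz) -(pnumx _ _ Hz'). Qed.

Lemma card_in2 (a a' : 'I_n) (P : pred 'I_n) : a != a' ->
  #|[set w in [set a; a'] | P w]| = (P a + P a')%N.
Proof.
move=> naa.
have E : [set w in [set a; a'] | P w] =
   (if P a then [set a] else set0) :|: (if P a' then [set a'] else set0).
  apply/setP => w; rewrite !inE.
  case: (eqVneq w a) => [->|nwa].
    by rewrite /=; case Pa: (P a); case: (P a'); rewrite !inE ?eqxx // (negbTE naa).
  rewrite /=.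
  case: (eqVneq w a') => [->|nwa'].
    by rewrite /=; case: (P a); case Pa': (P a'); rewrite !inE ?eqxx // eq_sym (negbTE naa).
  by rewrite /=; case: (P a); case: (P a'); rewrite !inE ?(negbTE nwa) ?(negbTE nwa').
rewrite E cardsU.
have -> : (if P a then [set a] else set0) :&: (if P a' then [set a'] else set0) = set0.
  apply/setP => w; rewrite !inE; case: (P a); case: (P a'); rewrite !inE ?andbF //.
  by case: (eqVneq w a) => [->|]; rewrite ?andbF // (negbTE naa).
by case: (P a); case: (P a'); rewrite /= ?cards1 ?cards0 ?subn0.
Qed.

Lemma card_in1 (a : 'I_n) (P : pred 'I_n) : #|[set w in [set a] | P w]| = P a.
Proof.
case Pa: (P a).
- have -> : [set w in [set a] | P w] = [set a].
    by apply/setP => w; rewrite !inE; case: eqP => [->|_]; rewrite ?Pa.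
  by rewrite cards1.
- have -> : [set w in [set a] | P w] = set0.
    by apply/setP => w; rewrite !inE; case: eqP => [->|_]; rewrite ?Pa.
  by rewrite cards0.
Qed.

Lemma block2 g h a a' b b' : a != a' -> b != b' -> NN g = [set a; a'] -> NN h = [set b; b'] ->
  r a' b' = r a b /\ r a' b = r a b'.
Proof.
move=> naa nbb Hg Hh.
have Ha : a \in NN g by rewrite Hg !inE eqxx.
have Ha' : a' \in NN g by rewrite Hg !inE eqxx orbT.
have Hb : b \in NN h by rewrite Hh !inE eqxx.
have Hb' : b' \in NN h by rewrite Hh !inE eqxx orbT.
have col c : ((r a b == c) + (r a' b == c) = (r a b' == c) + (r a' b' == c))%N.
  by have := colc g c Hb Hb'; rewrite Hg !card_in2.
have row c : ((r a b == c) + (r a b' == c) = (r a' b == c) + (r a' b' == c))%N.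
  by have := rowc h c Ha Ha'; rewrite Hh !card_in2.
have E1 : r a' b' = r a b.
  move: (col (r a b)) (row (r a b)); rewrite eqxx.
  case: (r a' b' == r a b) / eqP => // _.
  by case: (r a' b == r a b); case: (r a b' == r a b).
split => //.
move: (col (r a b')) (row (r a b')); rewrite eqxx E1.
case: (r a' b == r a b') / eqP => // _.
by case: (r a b == r a b').
Qed.

Definition CC g h : {set 'I_d.+1} :=
  [set c | [exists w in NN g, exists z in NN h, r w z == c]].

Lemma cplxE g h : cplx_card r (ctr r g) h = #|CC g h|.
Proof.
case: Hs => Hne _ _ Hreg.
apply: eq_card => c; rewrite !inE.
apply/idP/idP.
- have [u [v Huv]] := Hne c.
  rewrite (pnumE _ _ Huv) card_gt0 => /set0Pn [l]; rewrite inE => /andP[Hul Hlv].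
  rewrite ctrE in Hul.
  have [w0 Hw0] : exists w0, w0 \in NN g by apply/set0Pn; rewrite -card_gt0 NN_gt0.
  have Hw0' : r x w0 = g by apply/eqP; rewrite inE in Hw0.
  move: (Hreg h (ctr r c) g l u x w0 (eqP Hul) Hw0') => Heq.
  have : (0 < #|[set z | (r x z == h) && (r z w0 == ctr r c)]|)%N.
    by rewrite -Heq; apply/card_gt0P; exists v; rewrite inE Hlv ctrE Huv eqxx.
  case/card_gt0P => z; rewrite inE => /andP[Hz Hzw]; rewrite ctrE in Hzw.
  apply/existsP; exists w0; rewrite Hw0 /=; apply/existsP; exists z.
  by rewrite inE Hz.
- case/existsP => w /andP[Hw /existsP[z /andP[Hz Hwz]]].
  rewrite (pnumE _ _ (eqP Hwz)); apply/card_gt0P; exists x.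
  by rewrite inE ctrE; rewrite !inE in Hw Hz; rewrite Hw Hz.
Qed.

Lemma CC2 g h a a' b b' : a != a' -> b != b' -> NN g = [set a; a'] -> NN h = [set b; b'] ->
  CC g h = [set r a b; r a b'].
Proof.
move=> naa nbb Hg Hh; have [E1 E2] := block2 naa nbb Hg Hh.
apply/setP => c; rewrite !inE; apply/existsP/orP.
- case=> w /andP[Hw /existsP[z /andP[Hz /eqP <-]]].
  rewrite Hg !inE in Hw; rewrite Hh !inE in Hz.
  by case/orP: Hw => /eqP->; case/orP: Hz => /eqP->; rewrite ?E1 ?E2 eqxx; auto.
- case => /eqP ->; exists a; rewrite Hg !inE eqxx /=; apply/existsP.
  + by exists b; rewrite Hh !inE !eqxx.
  + by exists b'; rewrite Hh !inE !eqxx orbT.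
Qed.

Lemma cplx2 g h a a' b b' : a != a' -> b != b' -> NN g = [set a; a'] -> NN h = [set b; b'] ->
  cplx_card r (ctr r g) h = (r a b != r a b').+1.
Proof. by move=> naa nbb Hg Hh; rewrite cplxE (CC2 naa nbb Hg Hh) cards2. Qed.

Definition sN a := nbrs_sorted r le x a.
Lemma sN_perm a : perm_eq (sN a) (enum (NN a)).
Proof. by rewrite /sN /nbrs_sorted perm_sort /NN perm_refl. Qed.
Lemma sN_mem a u : (u \in sN a) = (u \in NN a).
Proof. by rewrite (perm_mem (sN_perm a)) mem_enum. Qed.
Lemma sN_size a : size (sN a) = #|NN a|.
Proof. by rewrite (perm_size (sN_perm a)) -cardE. Qed.
Lemma sN_uniq a : uniq (sN a).
Proof. by rewrite (perm_uniq (sN_perm a)) enum_uniq. Qed.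

Lemma sN2 a : valency r a = 2%N ->
  nth x (sN a) 0 != nth x (sN a) 1 /\ NN a = [set nth x (sN a) 0; nth x (sN a) 1].
Proof.
move=> H; rewrite valencyE in H.
have Hsz := sN_size a; rewrite H in Hsz.
have Hu := sN_uniq a. have Hm := sN_mem a.
case E: (sN a) Hsz Hu => [|s0 [|s1 [|? ?]]] //= _; rewrite inE andbT => ns.
split => //; apply/setP => u; rewrite -Hm E !inE //.
Qed.

Lemma sN1 a : valency r a = 1%N -> NN a = [set nth x (sN a) 0].
Proof.
move=> H; rewrite valencyE in H.
have Hsz := sN_size a; rewrite H in Hsz.
have Hm := sN_mem a.
case E: (sN a) Hsz => [|s0 [|? ?]] //= _.
by apply/setP => u; rewrite -Hm E !inE.
Qed.

Lemma sN_in a k : (k < #|NN a|)%N -> nth x (sN a) k \in NN a.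
Proof. by move=> Hk; rewrite -sN_mem; apply: mem_nth; rewrite sN_size. Qed.

Lemma val12 a : valency r a = 1%N \/ valency r a = 2%N.
Proof.
move: (Hqt a) (NN_gt0 a); rewrite /quasi_thin valencyE.
by case: #|NN a| => [|[|[|k]]] //; auto.
Qed.

Definition Es a : 'M[F]_n := Estar r F x a.
Definition EJE g h := Es g *m Jmx n F *m Es h.
Definition EAE g c h := Es g *m adjA r F c *m Es h.
Definition BB i j := Bmx r F le x i j.

Lemma mulEl a (M : 'M[F]_n) u v : (Es a *m M) u v = (r x u == a)%:R * M u v.
Proof.
rewrite mxE (bigD1 u) //= big1 ?addr0 => [|k nk]; rewrite mxE ?eqxx //.
by rewrite eq_sym (negbTE nk) mul0r.
Qed.

Lemma mulEr a (M : 'M[F]_n) u v : (M *m Es a) u v = M u v * (r x v == a)%:R.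
Proof.
rewrite mxE (bigD1 v) //= big1 ?addr0 => [|k nk]; rewrite mxE ?eqxx //.
by rewrite (negbTE nk) mulr0.
Qed.

Lemma EJE_E g h u v : EJE g h u v = ((r x u == g) && (r x v == h))%:R.
Proof. by rewrite /EJE mulEr mulEl mxE mulr1 -natrM mulnb. Qed.

Lemma EAE_E g c h u v : EAE g c h u v = ((r x u == g) && (r x v == h) && (r u v == c))%:R.
Proof.
rewrite /EAE mulEr mulEl mxE -!natrM !mulnb.
by case: (r x u == g); case: (r x v == h); case: (r u v == c).
Qed.

Lemma delta_E (s t u v : 'I_n) : (delta_mx s t : 'M[F]_n) u v = ((u == s) && (v == t))%:R.
Proof. by rewrite mxE. Qed.

Lemma BB_E i j u v : BB i j u v =
  ((u == nth x (sN i) 0) && (v == nth x (sN j) 0))%:R +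
  ((u == nth x (sN i) 1) && (v == nth x (sN j) 1))%:R.
Proof. by rewrite /BB /Bmx !mxE. Qed.

Lemma memNN2 g a a' u : NN g = [set a; a'] -> (r x u == g) = (u == a) || (u == a').
Proof. by move/setP/(_ u); rewrite !inE. Qed.
Lemma memNN1 g a u : NN g = [set a] -> (r x u == g) = (u == a).
Proof. by move/setP/(_ u); rewrite !inE. Qed.

Lemma sumE1 : \sum_a Es a = 1%:M.
Proof.
apply/matrixP => u v; rewrite summxE (bigD1 (r x u)) //= big1 ?addr0 => [|a na].
  by rewrite /Es !mxE eqxx andbT.
by rewrite /Es mxE (eq_sym (r x u) a) (negbTE na) andbF.
Qed.

Lemma sumA : \sum_a adjA r F a = Jmx n F.
Proof.
apply/matrixP => u v; rewrite summxE (bigD1 (r u v)) //= big1 ?addr0 => [|a na].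
  by rewrite !mxE eqxx.
by rewrite mxE (eq_sym (r u v) a) (negbTE na).
Qed.

Lemma mem2R i s0 s1 u : NN i = [set s0; s1] -> s0 != s1 ->
  ((r x u == i)%:R : F) = (u == s0)%:R + (u == s1)%:R.
Proof.
move=> Hi ns; rewrite (memNN2 u Hi).
case: (eqVneq u s0) => [->|_]; first by rewrite (negbTE ns) addr0.
by rewrite add0r.
Qed.

Lemma EJE4 g h a a' b b' : a != a' -> b != b' -> NN g = [set a; a'] -> NN h = [set b; b'] ->
  EJE g h = delta_mx a b + delta_mx a b' + delta_mx a' b + delta_mx a' b'.
Proof.
move=> naa nbb Hg Hh; apply/matrixP => u v.
have naa2 : a' != a by rewrite eq_sym.
have nbb2 : b' != b by rewrite eq_sym.
rewrite EJE_E !mxE (memNN2 u Hg) (memNN2 v Hh).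
(case: (eqVneq u a) => [?|nu1]; [subst u|case: (eqVneq u a') => [?|nu2]; [subst u|]]); rewrite ?eqxx ?(negbTE naa) ?(negbTE naa2) ?(negbTE nu1) ?(negbTE nu2) //=;
  (case: (eqVneq v b) => [?|nv1]; [subst v|case: (eqVneq v b') => [?|nv2]; [subst v|]]); rewrite ?eqxx ?(negbTE nbb) ?(negbTE nbb2) ?(negbTE nv1) ?(negbTE nv2) //=;
  rewrite ?addr0 ?add0r //.
Qed.

Lemma EAE2 g h c a a' b b' : a != a' -> b != b' -> NN g = [set a; a'] -> NN h = [set b; b'] ->
  EAE g c h = (r a b == c)%:R *: (delta_mx a b + delta_mx a' b') +
              (r a b' == c)%:R *: (delta_mx a b' + delta_mx a' b).
Proof.
move=> naa nbb Hg Hh; have [E1 E2] := block2 naa nbb Hg Hh.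
apply/matrixP => u v.
have naa2 : a' != a by rewrite eq_sym.
have nbb2 : b' != b by rewrite eq_sym.
rewrite EAE_E !mxE (memNN2 u Hg) (memNN2 v Hh).
(case: (eqVneq u a) => [?|nu1]; [subst u|case: (eqVneq u a') => [?|nu2]; [subst u|]]); rewrite ?eqxx ?(negbTE naa) ?(negbTE naa2) ?(negbTE nu1) ?(negbTE nu2) //=;
  (case: (eqVneq v b) => [?|nv1]; [subst v|case: (eqVneq v b') => [?|nv2]; [subst v|]]); rewrite ?eqxx ?(negbTE nbb) ?(negbTE nbb2) ?(negbTE nv1) ?(negbTE nv2) //=;
  rewrite ?E1 ?E2 ?mulr1n ?mulr0n ?addr0 ?add0r ?mulr1 ?mulr0 ?addr0 ?add0r //.
Qed.

Lemma EAE1l g h c a b : NN g = [set a] -> b \in NN h ->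
  EAE g c h = (r a b == c)%:R *: EJE g h.
Proof.
move=> Hg Hb.
have Hc v : r x v == h -> r a v = r a b.
  move=> Hv; have := colc g (r a b) (_ : v \in NN h) Hb.
  rewrite Hg !card_in1 eqxx => H; have /H : v \in NN h by rewrite inE.
  by case: (r a v =P r a b).
apply/matrixP => u v; rewrite EAE_E [in RHS]mxE EJE_E (memNN1 u Hg).
case: (eqVneq u a) => [->|nu] /=; last by rewrite mulr0.
case Hv: (r x v == h) => /=; last by rewrite mulr0.
by rewrite (Hc v Hv) mulr1.
Qed.

Lemma EAE1r g h c a b : NN h = [set b] -> a \in NN g ->
  EAE g c h = (r a b == c)%:R *: EJE g h.
Proof.
move=> Hh Ha.
have Hc u : r x u == g -> r u b = r a b.
  move=> Hu; have := rowc h (r a b) (_ : u \in NN g) Ha.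
  rewrite Hh !card_in1 eqxx => H; have /H : u \in NN g by rewrite inE.
  by case: (r u b =P r a b).
apply/matrixP => u v; rewrite EAE_E [in RHS]mxE EJE_E (memNN1 v Hh).
case Hu: (r x u == g) => /=; last by rewrite mulr0.
case: (eqVneq v b) => [->|nv] /=; last by rewrite mulr0.
by rewrite (Hc u Hu) mulr1.
Qed.

Lemma Es_1 a s : NN a = [set s] -> Es a = EJE a a.
Proof.
move=> Ha; apply/matrixP => u v; rewrite EJE_E /Es mxE !(memNN1 _ Ha).
case: (eqVneq u s) => [?|nu]; try subst u; case: (eqVneq v s) => [?|nv]; try subst v;
  rewrite ?eqxx ?andbF ?andbT //=.
all: try by rewrite eq_sym (negbTE nv).
all: try by rewrite (negbTE nu).

Qed.

Lemma Es_2 a : valency r a = 2%N -> Es a = BB a a.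
Proof.
move=> /sN2 [naa Ha]; move: naa Ha.
set a0 := nth x (sN a) 0; set a1 := nth x (sN a) 1 => naa Ha.
have naa2 : a1 != a0 by rewrite eq_sym.
apply/matrixP => u v; rewrite BB_E -/a0 -/a1 /Es mxE (memNN2 u Ha).
(case: (eqVneq u a0) => [?|nu1]; [subst u|case: (eqVneq u a1) => [?|nu2]; [subst u|]]); rewrite ?eqxx ?(negbTE naa) ?(negbTE naa2) ?(negbTE nu1) ?(negbTE nu2) //=;
  (case: (eqVneq v a0) => [?|nv1]; [subst v|case: (eqVneq v a1) => [?|nv2]; [subst v|]]); rewrite ?eqxx ?(negbTE naa) ?(negbTE naa2) ?(negbTE nv1) ?(negbTE nv2) //=;
  rewrite ?andbF ?addr0 ?add0r //.
Qed.

Lemma zmod4 (V : zmodType) (A B C D : V) : A + D = A + B + C + D - (B + C).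
Proof. by rewrite -(addrA A B C) addrAC addrK. Qed.

Definition matching (S T : {set 'I_n}) (M : 'M[F]_n) :=
  exists a a' b b', [/\ a != a', b != b', S = [set a; a'], T = [set b; b'] &
     M = delta_mx a b + delta_mx a' b'].

Lemma set2_eq (a a' c c' : 'I_n) : a != a' -> [set a; a'] = [set c; c'] ->
  (c = a /\ c' = a') \/ (c = a' /\ c' = a).
Proof.
move=> naa E.
have Hc : c \in [set a; a'] by rewrite E !inE eqxx.
have Hc' : c' \in [set a; a'] by rewrite E !inE eqxx orbT.
have Ha : a \in [set c; c'] by rewrite -E !inE eqxx.
have Ha' : a' \in [set c; c'] by rewrite -E !inE eqxx orbT.
rewrite !inE in Hc Hc' Ha Ha'.
case/orP: Hc => /eqP Hc; case/orP: Hc' => /eqP Hc'; subst; auto.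
- by move: Ha'; rewrite !orbb => /eqP E'; rewrite E' eqxx in naa.
- by move: Ha; rewrite !orbb => /eqP E'; rewrite E' eqxx in naa.
Qed.

Lemma matching_mul S T U M M' : matching S T M -> matching T U M' -> matching S U (M *m M').
Proof.
case=> a [a' [b [b' [naa nbb -> ET ->]]]].
case=> c [c' [e [e' [ncc nee EC EU ->]]]].
have nbb2 : b' != b by rewrite eq_sym.
case: (set2_eq nbb (etrans (esym ET) EC)) => [[-> ->]|[-> ->]].
- exists a, a', e, e'; split => //.
  by rewrite mulmxDl !mulmxDr !mul_delta_mx (mul_delta_mx_0 _ _ _ nbb) (mul_delta_mx_0 _ _ _ nbb2) addr0 add0r.
- exists a, a', e', e; split => //; first by rewrite eq_sym.
    by rewrite EU setUC.
  by rewrite mulmxDl !mulmxDr !mul_delta_mx (mul_delta_mx_0 _ _ _ nbb) (mul_delta_mx_0 _ _ _ nbb2) addr0 add0r.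
Qed.

Lemma matching_B g h M : valency r g = 2%N -> valency r h = 2%N ->
  matching (NN g) (NN h) M -> M = BB g h \/ M = EJE g h - BB g h.
Proof.
move=> /sN2 [ns Hg] /sN2 [nt Hh] [a [a' [b [b' [naa nbb Eg Eh ->]]]]].
have E4 := EJE4 naa nbb Eg Eh.
move: ns Hg nt Hh.
set s0 := nth x (sN g) 0; set s1 := nth x (sN g) 1.
set t0 := nth x (sN h) 0; set t1 := nth x (sN h) 1 => ns Hg nt Hh.
have -> : BB g h = delta_mx s0 t0 + delta_mx s1 t1 by [].
rewrite E4.
case: (set2_eq naa (etrans (esym Eg) Hg)) => [[-> ->]|[-> ->]];
  case: (set2_eq nbb (etrans (esym Eh) Hh)) => [[-> ->]|[-> ->]].
- by left.
- by right; rewrite -zmod4.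
- by right; rewrite (addrC (delta_mx a' b)) -zmod4.
- by left; rewrite addrC.
Qed.

Lemma step_match i j l : valency r i = 2%N -> valency r l = 2%N -> pnum r i j l = 1%N ->
  matching (NN i) (NN l) (EAE i j l).
Proof.
move=> /sN2 [naa Hi] /sN2 [nbb Hl].
move: naa Hi nbb Hl.
set a := nth x (sN i) 0; set a' := nth x (sN i) 1.
set b := nth x (sN l) 0; set b' := nth x (sN l) 1 => naa Hi nbb Hl.
have [E1 E2] := block2 naa nbb Hi Hl.
have : b \in NN l by rewrite Hl !inE eqxx.
rewrite inE => /eqP Hb.
rewrite (pnumx _ _ Hb) Hi card_in2 // E2 => Hp.
rewrite (EAE2 j naa nbb Hi Hl).
case E: (r a b == j) Hp; case E': (r a b' == j) => //= _.
- exists a, a', b, b'; split => //.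
  by rewrite mulr1n mulr0n scale1r scale0r addr0.
- exists a, a', b', b; split => //; first by rewrite eq_sym.
    by rewrite Hl setUC.
  by rewrite mulr1n mulr0n scale1r scale0r add0r.
Qed.

Definition Tcl (V : {vspace 'M[F]_n}) := [/\ 1%:M \in V, (forall a, adjA r F a \in V),
  (forall a, Estar r F x a \in V) & (forall P Q, P \in V -> Q \in V -> P *m Q \in V)].

Lemma J_V V : Tcl V -> Jmx n F \in V.
Proof. by rewrite /Tcl; case=> _ HA _ _; rewrite -sumA; apply: memv_suml => c _; exact: HA. Qed.

Lemma EJE_V V g h : Tcl V -> EJE g h \in V.
Proof.
move=> HV; have HJ := J_V HV; move: HV; rewrite /Tcl => -[_ HA HE HM].
by rewrite /EJE; apply: (HM); [apply: (HM)|]; rewrite ?HJ ?HE.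
Qed.

Lemma EAE_V V g c h : Tcl V -> EAE g c h \in V.
Proof.
rewrite /Tcl; case=> _ HA HE HM.
by rewrite /EAE; apply: (HM); [apply: (HM)|]; rewrite ?HA ?HE.
Qed.

Definition chain u v a := exists (i j l : nat -> 'I_d.+1),
  [/\ i 0%N = u, l a = v,
     (forall b, (b <= a)%N -> [/\ valency r (i b) = 2%N, valency r (l b) = 2%N &
                                 pnum r (i b) (j b) (l b) = 1%N]) &
     (forall c, (c < a)%N -> l c = i c.+1)].

Lemma chain_match V u v a : Tcl V -> chain u v a ->
  exists2 M, M \in V & matching (NN u) (NN v) M.
Proof.
move=> HV [i [j [l [Hi0 Hla Hst Hlk]]]].
suff: forall b, (b <= a)%N -> exists2 M, M \in V & matching (NN (i 0%N)) (NN (l b)) M.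
  by move/(_ a (leqnn a)); rewrite Hi0 Hla.
elim=> [|b IH] Hb.
- have [H1 H2 H3] := Hst 0%N Hb.
  by exists (EAE (i 0%N) (j 0%N) (l 0%N)); [exact: EAE_V | exact: step_match].
- have [M HM Hm] := IH (ltnW Hb).
  have [H1 H2 H3] := Hst b.+1 Hb.
  exists (M *m EAE (i b.+1) (j b.+1) (l b.+1)).
  + by move: (HV); rewrite /Tcl => -[_ _ _ HM']; apply: HM' => //; exact: EAE_V.
  + apply: matching_mul Hm _; rewrite Hlk //; exact: step_match.
Qed.

Lemma chain_cat u v w a1 a2 : chain u v a1 -> chain v w a2 -> chain u w (a1 + a2).+1.
Proof.
case=> i1 [j1 [l1 [Hi1 Hl1 Hs1 Hk1]]] [i2 [j2 [l2 [Hi2 Hl2 Hs2 Hk2]]]].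
exists (fun b => if (b <= a1)%N then i1 b else i2 (b - a1.+1)%N),
       (fun b => if (b <= a1)%N then j1 b else j2 (b - a1.+1)%N),
       (fun b => if (b <= a1)%N then l1 b else l2 (b - a1.+1)%N).
split => /=.
- by [].
- have -> : ((a1 + a2).+1 <= a1)%N = false by lia.
  by have -> : ((a1 + a2).+1 - a1.+1 = a2)%N by lia.
- move=> b Hb; case: ifP => Hba; first exact: Hs1.
  apply: Hs2; lia.
- move=> c Hc; case: (ltngtP c a1) => Hca /=.
  + exact: Hk1.
  + have -> : (c.+1 - a1.+1 = (c - a1.+1).+1)%N by lia.
    apply: Hk2; lia.
  + by subst c; rewrite subnn Hl1 Hi2.
Qed.

Lemma inU_val i j : inU r i j -> valency r i = 2%N /\ valency r j = 2%N.
Proof.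
case => [[H1 [H2 _]] | [a [fi [fj [fl [[Ha Hi0 Hla] [Hst _ _]]]]]]] //.
have [A _ _] := Hst 0%N (leq0n a); have [_ B _] := Hst a (leqnn a).
by rewrite -Hi0 -Hla.
Qed.

Lemma inU_chain i j : inU r i j -> exists a, chain i j a.
Proof.
case => [[H1 [H2 H3]] | [a [fi [fj [fl [[Ha Hi0 Hla] [Hst Hlk _]]]]]]]; last first.
  by exists a, fi, fj, fl.
move: (H1) (H2) => /sN2 [naa Hi] /sN2 [nbb Hj].
move: naa Hi nbb Hj.
set a := nth x (sN i) 0; set a' := nth x (sN i) 1.
set b := nth x (sN j) 0; set b' := nth x (sN j) 1 => naa Hi nbb Hj.
have [E1 E2] := block2 naa nbb Hi Hj.
have Hc : r a b != r a b' by move: H3; rewrite (cplx2 naa nbb Hi Hj); case: (r a b != r a b').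
have : b \in NN j by rewrite Hj !inE eqxx.
rewrite inE => /eqP Hb.
exists 0%N, (fun _ => i), (fun _ => r a b), (fun _ => j); split => // b0 _.
split => //.
by rewrite (pnumx _ _ Hb) Hi card_in2 // E2 eqxx eq_sym (negbTE Hc).
Qed.

Lemma inU_trans i j l : inU r i j -> inU r j l -> inU r i l.
Proof.
move=> Hij Hjl.
have [vi _] := inU_val Hij; have [_ vl] := inU_val Hjl.
have [a1 C1] := inU_chain Hij; have [a2 C2] := inU_chain Hjl.
have [fi [fj [fl [Hi0 Hla Hst Hlk]]]] := chain_cat C1 C2.
move: (vi) (vl) => /sN2 [naa Hi] /sN2 [nbb Hl].
have Hc := cplx2 naa nbb Hi Hl.
case: (eqVneq (r (nth x (sN i) 0) (nth x (sN l) 0)) (r (nth x (sN i) 0) (nth x (sN l) 1))) => E.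
- right; exists (a1 + a2).+1, fi, fj, fl; split; first by split.
  by split => //; rewrite Hc E eqxx.
- by left; rewrite Hc E.
Qed.

Lemma UsetP i j : ((i, j) \in Uset r) <-> inU r i j.
Proof. by rewrite inE /=; split => [/asboolP|?] //; apply/asboolP. Qed.

Lemma BB_V V i j : Tcl V -> inU r i j -> BB i j \in V.
Proof.
move=> HV H.
have [vi vj] := inU_val H; have [a C] := inU_chain H.
have [M HM Hm] := chain_match HV C.
case: (matching_B vi vj Hm) => E; first by rewrite -E.
have -> : BB i j = EJE i j - M by rewrite E opprB addrC subrK.
by rewrite memvB // EJE_V.
Qed.

Definition XX := Bfamily r F le x.

Lemma EJE_X a b : EJE a b \in XX.
Proof.
rewrite mem_cat; apply/orP; right; apply/mapP; exists (a, b) => //.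
by rewrite mem_enum inE.
Qed.

Lemma BB_X i j : inU r i j -> BB i j \in XX.
Proof.
move=> H; rewrite mem_cat; apply/orP; left; apply/mapP; exists (i, j) => //.
by rewrite mem_enum; apply/UsetP.
Qed.

Lemma X_cases P : P \in XX -> (exists i j, inU r i j /\ P = BB i j) \/ (exists a b, P = EJE a b).
Proof.
rewrite mem_cat => /orP[/mapP[[i j] Hij ->]| /mapP[[a b] _ ->]].
- by left; exists i, j; split => //; apply/UsetP; rewrite -mem_enum.
- by right; exists a, b.
Qed.

Lemma span_mul (X : seq 'M[F]_n) :
  (forall P Q, P \in X -> Q \in X -> P *m Q \in <<X>>%VS) ->
  forall P Q, P \in <<X>>%VS -> Q \in <<X>>%VS -> P *m Q \in <<X>>%VS.
Proof.
move=> H P Q HP HQ.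
rewrite (coord_span (X := in_tuple X) HP) mulmx_suml; apply: memv_suml => i _.
rewrite -scalemxAl; apply: memvZ.
rewrite (coord_span (X := in_tuple X) HQ) mulmx_sumr; apply: memv_suml => k _.
rewrite -scalemxAr; apply: memvZ.
by apply: H; apply: mem_nth; rewrite ?size_tuple ltn_ord.
Qed.

Lemma mul_delta_l (s t : 'I_n) (M : 'M[F]_n) u v :
  (delta_mx s t *m M) u v = (u == s)%:R * M t v.
Proof.
rewrite mxE (bigD1 t) //= big1 ?addr0 => [|k nk]; rewrite mxE ?eqxx ?andbT //.
by rewrite (negbTE nk) andbF mul0r.
Qed.

Lemma mul_delta_r (s t : 'I_n) (M : 'M[F]_n) u v :
  (M *m delta_mx s t) u v = M u s * (v == t)%:R.
Proof.
rewrite mxE (bigD1 s) //= big1 ?addr0 => [|k nk]; rewrite mxE ?eqxx //.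
by rewrite (negbTE nk) mulr0.
Qed.

Lemma JDJ (D : 'M[F]_n) : Jmx n F *m D *m Jmx n F = (\sum_w \sum_w' D w w') *: Jmx n F.
Proof.
apply/matrixP => u v; rewrite !mxE mulr1 exchange_big /=; apply: eq_bigr => w _.
rewrite !mxE mulr1; apply: eq_bigr => w' _; by rewrite mxE mul1r.
Qed.

Lemma EJE_mul a b c e : exists k, EJE a b *m EJE c e = k *: EJE a e.
Proof.
exists (\sum_w \sum_w' (Es b *m Es c) w w').
have -> : EJE a b *m EJE c e = Es a *m (Jmx n F *m (Es b *m Es c) *m Jmx n F) *m Es e.
  by rewrite /EJE !mulmxA.
by rewrite JDJ -scalemxAr -scalemxAl.
Qed.

Lemma BB_parts i : valency r i = 2%N ->
  [/\ nth x (sN i) 0 != nth x (sN i) 1, NN i = [set nth x (sN i) 0; nth x (sN i) 1],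
      r x (nth x (sN i) 0) = i & r x (nth x (sN i) 1) = i].
Proof.
move=> /sN2 [ns Hi]; split => //; apply/eqP.
- have : nth x (sN i) 0 \in NN i by rewrite Hi !inE eqxx.
  by rewrite inE.
- have : nth x (sN i) 1 \in NN i by rewrite Hi !inE eqxx orbT.
  by rewrite inE.
Qed.

Lemma BB_EJE i j c e : inU r i j -> BB i j *m EJE c e = (j == c)%:R *: EJE i e.
Proof.
move=> /inU_val [vi vj].
have [ns Hi Hs0 Hs1] := BB_parts vi; have [nt Hj Ht0 Ht1] := BB_parts vj.
apply/matrixP => u v.
rewrite /BB /Bmx -/(sN i) -/(sN j) mulmxDl [LHS]mxE !mul_delta_l !EJE_E Ht0 Ht1.
rewrite mxE EJE_E.
case: (j == c); case: (r x v == e);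
  rewrite /= ?andbT ?andbF ?mulr1n ?mulr0n ?mulr0 ?mul0r ?mulr1 ?mul1r ?addr0 //.
by rewrite (mem2R _ Hi ns).
Qed.

Lemma EJE_BB i j c e : inU r i j -> EJE c e *m BB i j = (e == i)%:R *: EJE c j.
Proof.
move=> /inU_val [vi vj].
have [ns Hi Hs0 Hs1] := BB_parts vi; have [nt Hj Ht0 Ht1] := BB_parts vj.
apply/matrixP => u v.
rewrite /BB /Bmx -/(sN i) -/(sN j) mulmxDr [LHS]mxE !mul_delta_r !EJE_E Hs0 Hs1.
rewrite mxE EJE_E (eq_sym i e).
case: (e == i); case: (r x u == c);
  rewrite /= ?andbT ?andbF ?mulr1n ?mulr0n ?mulr0 ?mul0r ?mulr1 ?mul1r ?addr0 //.
by rewrite (mem2R _ Hj nt).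
Qed.

Lemma BB_BB i j k l : inU r i j -> inU r k l ->
  BB i j *m BB k l = if j == k then BB i l else 0.
Proof.
move=> Hij Hkl; have [vi vj] := inU_val Hij; have [vk vl] := inU_val Hkl.
have [ns Hi Hs0 Hs1] := BB_parts vi; have [nt Ht Ht0 Ht1] := BB_parts vj.
have [nk Hk Hk0 Hk1] := BB_parts vk.
rewrite /BB /Bmx -/(sN i) -/(sN j) -/(sN k) -/(sN l).
case: (eqVneq j k) => [<-|njk].
- have nt2 : nth x (sN j) 1 != nth x (sN j) 0 by rewrite eq_sym.
  by rewrite mulmxDl !mulmxDr !mul_delta_mx (mul_delta_mx_0 _ _ _ nt) (mul_delta_mx_0 _ _ _ nt2) addr0 add0r.
- have D p q : r x p = j -> r x q = k -> p != q.
    by move=> Hp Hq; apply/eqP => E; move: njk; rewrite -Hp -Hq E eqxx.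
  rewrite mulmxDl !mulmxDr !(mul_delta_mx_0 _ _ _ (D _ _ _ _)) // ?addr0 //.
Qed.

Lemma zmod4b (V : zmodType) (A B C D : V) : A + D + (B + C) = A + B + C + D.
Proof. by rewrite addrA (addrAC A D B) (addrAC _ D C). Qed.

Definition WW := <<XX>>%VS.

Lemma inW_EJE a b : EJE a b \in WW.
Proof. exact/memv_span/EJE_X. Qed.

Lemma inW_BB i j : inU r i j -> BB i j \in WW.
Proof. by move=> H; apply/memv_span/BB_X. Qed.

Lemma inW_match g h M : inU r g h -> matching (NN g) (NN h) M -> M \in WW.
Proof.
move=> H Hm; have [vg vh] := inU_val H.
case: (matching_B vg vh Hm) => ->; first exact: inW_BB.
by rewrite memvB ?inW_EJE ?inW_BB.
Qed.

Lemma inU_diag a : valency r a = 2%N -> inU r a a.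
Proof.
move=> va; left; split => //; split => //.
have [ns Hi Hs0 Hs1] := BB_parts va.
rewrite (cplx2 ns ns Hi Hi).
case: Hs => _ H0 _ _.
have -> : r (nth x (sN a) 0) (nth x (sN a) 0) = ord0 by apply/eqP; rewrite H0.
by have := H0 (nth x (sN a) 0) (nth x (sN a) 1); rewrite (negbTE ns) eq_sym => ->.
Qed.

Lemma inW_Es a : Es a \in WW.
Proof.
case: (val12 a) => va.
- by rewrite (Es_1 (sN1 va)) inW_EJE.
- by rewrite (Es_2 va); apply: inW_BB; exact: inU_diag.
Qed.

Lemma inW_EAE g c h : EAE g c h \in WW.
Proof.
case: (val12 g) => vg.
  have Hb : nth x (sN h) 0 \in NN h by apply: sN_in; rewrite NN_gt0.
  by rewrite (EAE1l c (sN1 vg) Hb) memvZ // inW_EJE.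
case: (val12 h) => vh.
  have Ha : nth x (sN g) 0 \in NN g by apply: sN_in; rewrite NN_gt0.
  by rewrite (EAE1r c (sN1 vh) Ha) memvZ // inW_EJE.
have [naa Hg _ _] := BB_parts vg; have [nbb Hh _ _] := BB_parts vh.
move: naa Hg nbb Hh.
set a := nth x (sN g) 0; set a' := nth x (sN g) 1.
set b := nth x (sN h) 0; set b' := nth x (sN h) 1 => naa Hg nbb Hh.
rewrite (EAE2 c naa nbb Hg Hh).
case: (eqVneq (r a b) (r a b')) => E.
- by rewrite E -scalerDr memvZ // zmod4b -(EJE4 naa nbb Hg Hh) inW_EJE.
- have HU : inU r g h by left; split => //; split => //; rewrite (cplx2 naa nbb Hg Hh) E.
  rewrite memvD // memvZ //; apply: (inW_match HU).
  + by exists a, a', b, b'.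
  + exists a, a', b', b; split => //; first by rewrite eq_sym.
    by rewrite Hh setUC.
Qed.

Lemma W_Tcl : Tcl WW.
Proof.
split.
- by rewrite -sumE1; apply: memv_suml => a _; exact: inW_Es.
- move=> c; rewrite -[adjA r F c]mul1mx -[1%:M *m _]mulmx1 -sumE1.
  rewrite mulmx_sumr; apply: memv_suml => h _; rewrite !mulmx_suml; apply: memv_suml => g _.
  exact: inW_EAE.
- exact: inW_Es.
- apply: span_mul => P Q /X_cases [[i [j [Hij ->]]]|[a [b ->]]] /X_cases [[k [l [Hkl ->]]]|[c [e ->]]].
  + rewrite BB_BB //; case: eqP => [E|_]; last exact: mem0v.
    by apply: inW_BB; apply: inU_trans Hij _; rewrite E.
  + by rewrite BB_EJE // memvZ // inW_EJE.
  + by rewrite EJE_BB // memvZ // inW_EJE.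
  + by have [k ->] := EJE_mul a b c e; rewrite memvZ // inW_EJE.
Qed.

Lemma free_crit (X : seq 'M[F]_n) : uniq X ->
  (forall P, P \in X -> exists (u v u' v' : 'I_n) (e : F), P u v - e * P u' v' = 1 /\
       forall Q, Q \in X -> Q != P -> Q u v - e * Q u' v' = 0) -> free X.
Proof.
move=> Hu H; change (free (in_tuple X)); apply/freeP => k Hk i.
have Hi : X`_i \in X by apply: mem_nth; rewrite ltn_ord.
have [u [v [u' [v' [e [H1 H2]]]]]] := H _ Hi.
have : (\sum_(j < size X) k j *: X`_j) u v - e * (\sum_(j < size X) k j *: X`_j) u' v' = 0.
  by rewrite Hk !mxE mulr0 subr0.
rewrite !summxE mulr_sumr -sumrB (bigD1 i) //= big1 ?addr0.
- rewrite !mxE mulrCA -mulrBr H1 mulr1 => ->. by [].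
- move=> j nji; rewrite !mxE mulrCA -mulrBr H2 ?mulr0 //.
    by apply: mem_nth; rewrite ltn_ord.
  by rewrite nth_uniq ?ltn_ord.
Qed.

Lemma neq_of_r p q : r x p != r x q -> p != q.
Proof. by apply: contraNneq => ->. Qed.

Lemma BB_supp k l u v : inU r k l -> BB k l u v != 0 -> r x u = k /\ r x v = l.
Proof.
move=> /inU_val [vk vl]; have [_ _ Hk0 Hk1] := BB_parts vk; have [_ _ Hl0 Hl1] := BB_parts vl.
case: (eqVneq (r x u) k) => Hu; case: (eqVneq (r x v) l) => Hv // H; move: H; rewrite BB_E.
- have n0 : v != nth x (sN l) 0 by apply: neq_of_r; rewrite Hl0.
  have n1 : v != nth x (sN l) 1 by apply: neq_of_r; rewrite Hl1.
  by rewrite (negbTE n0) (negbTE n1) !andbF addr0 eqxx.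
- have n0 : u != nth x (sN k) 0 by apply: neq_of_r; rewrite Hk0.
  have n1 : u != nth x (sN k) 1 by apply: neq_of_r; rewrite Hk1.
  by rewrite (negbTE n0) (negbTE n1) addr0 eqxx.
- have n0 : u != nth x (sN k) 0 by apply: neq_of_r; rewrite Hk0.
  have n1 : u != nth x (sN k) 1 by apply: neq_of_r; rewrite Hk1.
  by rewrite (negbTE n0) (negbTE n1) addr0 eqxx.
Qed.

Lemma BB_val i j : inU r i j ->
  BB i j (nth x (sN i) 0) (nth x (sN j) 0) = 1 /\ BB i j (nth x (sN i) 0) (nth x (sN j) 1) = 0.
Proof.
move=> /inU_val [vi vj]; have [ns _ _ _] := BB_parts vi; have [nt _ _ _] := BB_parts vj.
rewrite !BB_E !eqxx (negbTE ns) /= eq_sym (negbTE nt).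
by split; rewrite /= ?mulr1n ?mulr0n ?addr0.
Qed.

Lemma BB_zero_off k l u v : inU r k l -> (r x u != k) || (r x v != l) -> BB k l u v = 0.
Proof.
move=> Hkl H; apply/eqP; apply: contraTT H => /(BB_supp Hkl) [-> ->].
by rewrite !eqxx.
Qed.

Lemma free_X : free XX.
Proof.
have BBinj : {in enum (Uset r) &, injective (fun ij => BB ij.1 ij.2)}.
  move=> [i j] [k l]; rewrite !mem_enum => /UsetP Hij /UsetP Hkl /= E.
  have [V1 _] := BB_val Hij.
  have Hn : BB k l (nth x (sN i) 0) (nth x (sN j) 0) != 0 by rewrite -E V1 oner_neq0.
  have [E1 E2] := BB_supp Hkl Hn.
  have [vi vj] := inU_val Hij.
  have [_ _ Hi0 _] := BB_parts vi; have [_ _ Hj0 _] := BB_parts vj.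
  by rewrite -E1 -E2 Hi0 Hj0.
have Hp a : r x (nth x (sN a) 0) = a.
  have : nth x (sN a) 0 \in NN a by apply: sN_in; rewrite NN_gt0.
  by rewrite inE => /eqP.
have Hq b : r x (nth x (sN b) (#|NN b|.-1)) = b.
  have : nth x (sN b) (#|NN b|.-1) \in NN b.
    by apply: sN_in; have := NN_gt0 b; case: #|NN b|.
  by rewrite inE => /eqP.
have EJEval a b c e : EJE c e (nth x (sN a) 0) (nth x (sN b) (#|NN b|.-1)) = ((a == c) && (b == e))%:R.
  by rewrite EJE_E Hp Hq.
have EJEinj : {in enum [set: 'I_d.+1 * 'I_d.+1] &, injective (fun ab => EJE ab.1 ab.2)}.
  move=> [a b] [c e] _ _ /= E.
  have := congr1 (fun M : 'M[F]_n => M (nth x (sN a) 0) (nth x (sN b) (#|NN b|.-1))) E.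
  rewrite /= !EJEval !eqxx /=.
  case: (eqVneq a c) => [->|_]; case: (eqVneq b e) => [->|_] //=;
    by rewrite mulr0n mulr1n => /eqP; rewrite oner_eq0.
have phiB_EJE i j a b : inU r i j ->
    EJE a b (nth x (sN i) 0) (nth x (sN j) 0) - 1 * EJE a b (nth x (sN i) 0) (nth x (sN j) 1) = 0.
  move=> /inU_val [vi vj].
  have [_ _ Hi0 _] := BB_parts vi; have [_ _ Hj0 Hj1] := BB_parts vj.
  by rewrite !EJE_E Hi0 Hj0 Hj1 mul1r subrr.
have HU : uniq XX.
  rewrite /XX /Bfamily cat_uniq; apply/and3P; split.
  - by rewrite (map_inj_in_uniq BBinj) enum_uniq.
  - apply/hasPn => M /mapP [[a b] _ ->] /=; apply/negP => /mapP [[i j] Hij E].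
    rewrite mem_enum in Hij; move/UsetP: Hij => Hij.
    change (EJE a b = BB i j) in E.
    have := phiB_EJE i j a b Hij; rewrite E.
    have [-> ->] := BB_val Hij.
    by rewrite mulr0 subr0 => /eqP; rewrite oner_eq0.
  - by rewrite (map_inj_in_uniq EJEinj) enum_uniq.
apply: free_crit HU _.
move=> P /X_cases [[i [j [Hij ->]]]|[a [b ->]]].
- have [vi vj] := inU_val Hij.
  have [_ _ Hi0 _] := BB_parts vi; have [_ _ Hj0 Hj1] := BB_parts vj.
  exists (nth x (sN i) 0), (nth x (sN j) 0), (nth x (sN i) 0), (nth x (sN j) 1), 1.
  have [V1 V2] := BB_val Hij.
  split; first by rewrite V1 V2 mulr0 subr0.
  move=> Q /X_cases [[k [l [Hkl ->]]]|[a [b ->]]] nQ; last exact: phiB_EJE.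
  have Hne : (i != k) || (j != l).
    case: (eqVneq i k) => [Eik|] //; case: (eqVneq j l) => [Ejl|] //.
    by move: nQ; rewrite Eik Ejl eqxx.
  rewrite !(BB_zero_off Hkl) ?mulr0 ?subr0 // Hi0 ?Hj0 ?Hj1;
    by case/orP: Hne => ->; rewrite ?orbT.
- exists (nth x (sN a) 0), (nth x (sN b) (#|NN b|.-1)),
         (nth x (sN a) 0), (nth x (sN b) (#|NN b|.-1)), 0.
  split; first by rewrite mul0r subr0 EJEval !eqxx /= mulr1n.
  move=> Q /X_cases [[i [j [Hij ->]]]|[c [e ->]]] nQ; rewrite mul0r subr0.
  + case: (eqVneq i a) => [Eia|nia]; [case: (eqVneq j b) => [Ejb|njb]|].
    * subst i j; have [_ vb] := inU_val Hij.
      move: (vb); rewrite valencyE => ->.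
      by have [_ ->] := BB_val Hij.
    * by rewrite (BB_zero_off Hij) // Hq (eq_sym b) njb orbT.
    * by rewrite (BB_zero_off Hij) // Hp (eq_sym a) nia.
  + rewrite EJEval.
    case: (eqVneq a c) => [Eac|]; case: (eqVneq b e) => [Ebe|] //=; rewrite ?andbF ?mulr0n //.
    by move: nQ; rewrite Eac Ebe eqxx.
Qed.

Lemma main : is_basis_of_terwilliger r x XX.
Proof.
split.
- move=> M HM V H1 HA HE HMul.
  have HV : Tcl V by split.
  case/X_cases: HM => [[i [j [Hij ->]]]|[a [b ->]]]; first exact: BB_V.
  exact: EJE_V.
- exact: free_X.
- move=> M HM; have [H1 HA HE HMul] := W_Tcl.
  exact: HM.
Qed.


End Proof.

Theorem corollary4p6 (n d : nat) (r : 'I_n -> 'I_n -> 'I_d.+1) (F : fieldType)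
  (x : 'I_n) (le : rel 'I_n) :
  is_scheme r -> quasi_thin r -> total_order le ->
  is_basis_of_terwilliger r x (Bfamily r F le x).
Proof. by move=> Hs Hqt _; exact: main. Qed.
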